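(* Let $(X,(\cdot,\cdot|\cdot))$ be a 2-inner product space over $\mathbb{K}\in\{\mathbb{R},\mathbb{C}\}$, let $n$ be a positive integer, let $z_1,\dots,z_n,z\in X$ and $\mu_1,\dots,\mu_n\in\mathbb{K}$. Define $A_1=\max_{1\le i\le n}|\mu_i|^2\sum_{i=1}^n\|z_i|z\|^2$; $A_2(\alpha)=\big(\sum_{i=1}^n|\mu_i|^{2\alpha}\big)^{1/\alpha}\big(\sum_{i=1}^n\|z_i|z\|^{2\beta}\big)^{1/\beta}$ for $\alpha>1$, $\frac1\alpha+\frac1\beta=1$; $A_3=\sum_{i=1}^n|\mu_i|^2\max_{1\le i\le n}\|z_i|z\|^2$; and $B_1=\max_{1\le i\le n}|\mu_i|^2\sum_{1\le i\ne j\le n}|(z_i,z_j|z)|$; $B_2(\gamma)=(n-1)^{1/\gamma}\big(\sum_{i=1}^n|\mu_i|^{2\gamma}\big)^{1/\gamma}\big(\sum_{1\le i\ne j\le n}|(z_i,z_j|z)|^{\delta}\big)^{1/\delta}$ for $\gamma>1$, $\frac1\gamma+\frac1\delta=1$; $B_3=(n-1)\sum_{i=1}^n|\mu_i|^2\max_{1\le i\ne j\le n}|(z_i,z_j|z)|$. Then for every choice of $A\in\{A_1,A_2(\alpha),A_3\}$ and $B\in\{B_1,B_2(\gamma),B_3\}$ (with any admissible $\alpha,\gamma$), \[ \Big\|\sum_{i=1}^n\mu_iz_i\,\Big|\,z\Big\|^2\le A+B. \]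
   Context: A 2-inner product on a linear space $X$ of dimension greater than $1$ over $\mathbb{K}$ ($\mathbb{K}=\mathbb{R}$ or $\mathbb{C}$) is a function $(\cdot,\cdot|\cdot):X\times X\times X\to\mathbb{K}$ such that for all $x,x',y,z\in X$ and $\alpha\in\mathbb{K}$: (i) $(x,x|z)\ge 0$, and $(x,x|z)=0$ iff $x$ and $z$ are linearly dependent; (ii) $(x,x|z)=(z,z|x)$; (iii) $(y,x|z)=\overline{(x,y|z)}$; (iv) $(\alpha x,y|z)=\alpha(x,y|z)$; (v) $(x+x',y|z)=(x,y|z)+(x',y|z)$. The associated 2-norm is $\|x|z\|=\sqrt{(x,x|z)}$. Sums and maxima indexed by $1\le i\ne j\le n$ run over all ordered pairs $(i,j)$ with $i\ne j$. *)

(* Defs.v *)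
From HB Require Import structures.
From mathcomp Require Import all_boot all_order all_algebra.
From mathcomp Require Import reals exp.
From mathcomp Require Import complex.
Set Implicit Arguments. Unset Strict Implicit. Unset Printing Implicit Defensive.
Import Order.TTheory GRing.Theory Num.Theory.
Local Open Scope ring_scope.

Section TwoInnerProduct.
Variables (K : numFieldType) (X : lmodType K).

Definition lin_dep (x z : X) : Prop :=
  exists a b : K, (a != 0 \/ b != 0) /\ a *: x + b *: z = 0.

(** [ip] is a 2-inner product on X (over K with conjugation [cj]);
    X has dimension greater than 1. *)
Definition is_2ip (cj : K -> K) (ip : X -> X -> X -> K) : Prop :=
  (exists x y : X, ~ lin_dep x y) /\
  forall (x x' y z : X) (a : K),
    0 <= ip x x z /\
    (ip x x z = 0 <-> lin_dep x z) /\
    ip x x z = ip z z x /\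
    ip y x z = cj (ip x y z) /\
    ip (a *: x) y z = a * ip x y z /\
    ip (x + x') y z = ip x y z + ip x' y z.
End TwoInnerProduct.

Section Cor.
Variables (R : realType) (K : numFieldType).
Variable absK : K -> R.

Definition tnorm (X : lmodType K) (ip : X -> X -> X -> K) (x z : X) : R :=
  Num.sqrt (absK (ip x x z)).

Definition cor24_claim (cj : K -> K) : Prop :=
  forall (X : lmodType K) (ip : X -> X -> X -> K), is_2ip cj ip ->
  forall (n : nat), (0 < n)%N ->
  forall (zs : 'I_n -> X) (z : X) (mu : 'I_n -> K),
  let nz i := tnorm ip (zs i) z in
  let A1 := (\big[Num.max/0]_(i < n) absK (mu i) ^+ 2) *
            \sum_(i < n) nz i ^+ 2 in
  let A2 (alpha beta : R) :=
            powR (\sum_(i < n) powR (absK (mu i)) (2 * alpha)) alpha^-1 *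
            powR (\sum_(i < n) powR (nz i) (2 * beta)) beta^-1 in
  let A3 := (\sum_(i < n) absK (mu i) ^+ 2) * \big[Num.max/0]_(i < n) nz i ^+ 2 in
  let B1 := (\big[Num.max/0]_(i < n) absK (mu i) ^+ 2) *
            \sum_(i < n) \sum_(j < n | j != i) absK (ip (zs i) (zs j) z) in
  let B2 (gamma delta : R) :=
            powR (n.-1)%:R gamma^-1 *
            powR (\sum_(i < n) powR (absK (mu i)) (2 * gamma)) gamma^-1 *
            powR (\sum_(i < n) \sum_(j < n | j != i)
                    powR (absK (ip (zs i) (zs j) z)) delta) delta^-1 in
  let B3 := (n.-1)%:R * (\sum_(i < n) absK (mu i) ^+ 2) *
            \big[Num.max/0]_(i < n) \big[Num.max/0]_(j < n | j != i)
                 absK (ip (zs i) (zs j) z) in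
  forall (alpha beta gamma delta : R),
    1 < alpha -> alpha^-1 + beta^-1 = 1 ->
    1 < gamma -> gamma^-1 + delta^-1 = 1 ->
  forall A B : R,
    (A = A1 \/ A = A2 alpha beta \/ A = A3) ->
    (B = B1 \/ B = B2 gamma delta \/ B = B3) ->
    tnorm ip (\sum_(i < n) mu i *: zs i) z ^+ 2 <= A + B.
End Cor.

(* Main.v *)
Require Import Defs.
From mathcomp Require Import all_boot all_order all_algebra.
From mathcomp Require Import reals exp.
From mathcomp Require Import complex.
From mathcomp Require Import ring lra.
Set Implicit Arguments. Unset Strict Implicit. Unset Printing Implicit Defensive.
Import Order.TTheory GRing.Theory Num.Theory.
Local Open Scope ring_scope.

Lemma holder_fin (R : realType) (T : finType) (P : pred T) (f g : T -> R) (p q : R) :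
  (forall k, 0 <= f k) -> (forall k, 0 <= g k) -> 0 < p -> 0 < q -> p^-1 + q^-1 = 1 ->
  \sum_(k | P k) f k * g k <=
  powR (\sum_(k | P k) powR (f k) p) p^-1 * powR (\sum_(k | P k) powR (g k) q) q^-1.
Proof.
move=> f0 g0 p0 q0 pq.
set Sf := \sum_(k | P k) _; set Sg := \sum_(k | P k) powR (g k) q.
have Sf0 : 0 <= Sf by apply: sumr_ge0 => k _; apply: powR_ge0.
have Sg0 : 0 <= Sg by apply: sumr_ge0 => k _; apply: powR_ge0.
have [Sfe|Sfn] := eqVneq Sf 0.
  have h := psumr_eq0P (fun k _ => powR_ge0 _ _) Sfe.
  rewrite big1 ?mulr_ge0 ?powR_ge0 // => k Pk.
  by rewrite (powR_eq0_eq0 (h k Pk)) mul0r.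
have [Sge|Sgn] := eqVneq Sg 0.
  have h := psumr_eq0P (fun k _ => powR_ge0 _ _) Sge.
  rewrite big1 ?mulr_ge0 ?powR_ge0 // => k Pk.
  by rewrite (powR_eq0_eq0 (h k Pk)) mulr0.
set F := powR Sf p^-1; set G := powR Sg q^-1.
have Fp : powR F p = Sf by rewrite /F -powRrM mulVf ?gt_eqF // powRr1.
have Gq : powR G q = Sg by rewrite /G -powRrM mulVf ?gt_eqF // powRr1.
have F0 : 0 < F by apply: powR_gt0; rewrite lt_neqAle eq_sym Sfn Sf0.
have G0 : 0 < G by apply: powR_gt0; rewrite lt_neqAle eq_sym Sgn Sg0.
have Fi : powR F^-1 p = Sf^-1.
  apply: (mulIf Sfn); rewrite (mulVf Sfn) -[X in _ * X]Fp.
  rewrite -(@powRM _ F^-1 F); [|by rewrite invr_ge0 (ltW F0)|exact: (ltW F0)].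
  by rewrite (mulVf (lt0r_neq0 F0)) powR1.
have Gi : powR G^-1 q = Sg^-1.
  apply: (mulIf Sgn); rewrite (mulVf Sgn) -[X in _ * X]Gq.
  rewrite -(@powRM _ G^-1 G); [|by rewrite invr_ge0 (ltW G0)|exact: (ltW G0)].
  by rewrite (mulVf (lt0r_neq0 G0)) powR1.
have F1 : 0 <= F^-1 by rewrite invr_ge0 (ltW F0).
have G1 : 0 <= G^-1 by rewrite invr_ge0 (ltW G0).
have e1 : \sum_(i | P i) powR (f i / F) p = Sf * Sf^-1.
  rewrite /Sf mulr_suml; apply: eq_bigr => k _.
  by rewrite (powRM _ (f0 k) F1) Fi.
have e2 : \sum_(i | P i) powR (g i / G) q = Sg * Sg^-1.
  rewrite /Sg mulr_suml; apply: eq_bigr => k _.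
  by rewrite (powRM _ (g0 k) G1) Gi.
rewrite (mulfV Sfn) in e1; rewrite (mulfV Sgn) in e2.
clearbody F G Sf Sg.
have key : \sum_(k | P k) (f k / F) * (g k / G) <= 1.
  apply: (@le_trans _ _ (\sum_(k | P k) (powR (f k / F) p / p + powR (g k / G) q / q))).
    apply: ler_sum => k _.
    exact: (conjugate_powR (mulr_ge0 (f0 k) F1) (mulr_ge0 (g0 k) G1) p0 q0 pq).
  rewrite big_split /= -!mulr_suml.
  have H : forall a b : R, a = 1 -> b = 1 -> a / p + b / q <= 1.
    by move=> a b -> ->; rewrite !mul1r pq.
  by apply: H; [exact e1|exact e2].
have E : \sum_(k | P k) f k * g k = F * G * \sum_(k | P k) (f k / F) * (g k / G).
  rewrite mulr_sumr; apply: eq_bigr => k _.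
  rewrite mulrACA [F * _]mulrC [G * _]mulrC.
  by rewrite -(mulrA (f k)) -(mulrA (g k)) (mulVf (lt0r_neq0 F0)) (mulVf (lt0r_neq0 G0)) !mulr1.
have K2 := ler_wpM2l (mulr_ge0 (ltW F0) (ltW G0)) key.
rewrite mulr1 -E in K2; exact K2.
Qed.
Section Abs.
Variables (R : realType) (n : nat).
Implicit Types (m nz : 'I_n -> R) (c : 'I_n -> 'I_n -> R).

Lemma cnt (i : 'I_n) (x : R) : \sum_(j < n | j != i) x = (n.-1)%:R * x.
Proof.
have h : \sum_(j < n) x = x + \sum_(j < n | true && (j != i)) x := bigD1 i isT.
move: h; rewrite sumr_const card_ord /=.
case: n i => [|n'] i; first by case: i.
rewrite mulrS /= => /addrI <-; by rewrite mulr_natl.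
Qed.

Lemma off_le m c : (forall i, 0 <= m i) -> (forall i j, 0 <= c i j) ->
  (forall i j, c i j = c j i) ->
  \sum_i \sum_(j | j != i) m i * m j * c i j <=
  \sum_i \sum_(j | j != i) m i ^+ 2 * c i j.
Proof.
move=> m0 c0 cs.
have E : \sum_i \sum_(j | j != i) m j ^+ 2 * c i j =
         \sum_i \sum_(j | j != i) m i ^+ 2 * c i j.
  rewrite (exchange_big_dep xpredT) //=.
  apply: eq_bigr => j _; apply: eq_big => [i|i _]; first by rewrite eq_sym.
  by rewrite cs.
apply: (@le_trans _ _ (\sum_i \sum_(j | j != i)
          (m i ^+ 2 * c i j + m j ^+ 2 * c i j) / 2)).
  apply: ler_sum => i _; apply: ler_sum => j _.
  have := mulr_ge0 (sqr_ge0 (m i - m j)) (c0 i j).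
  move: (m i) (m j) (c i j) => a b x h. nra.
have -> : \sum_i \sum_(j | j != i) (m i ^+ 2 * c i j + m j ^+ 2 * c i j) / 2 =
   (\sum_i \sum_(j | j != i) m i ^+ 2 * c i j +
    \sum_i \sum_(j | j != i) m j ^+ 2 * c i j) / 2.
  rewrite -big_split mulr_suml; apply: eq_bigr => i _.
  by rewrite -big_split mulr_suml.
rewrite E.
move: (\sum_i \sum_(j | j != i) m i ^+ 2 * c i j) => s. lra.
Qed.

Lemma maxge (F : 'I_n -> R) i : F i <= \big[Num.max/0]_(j < n) F j.
Proof. exact: le_bigmax. Qed.

Lemma maxge2 (F : 'I_n -> 'I_n -> R) i j : j != i ->
  F i j <= \big[Num.max/0]_(i < n) \big[Num.max/0]_(j < n | j != i) F i j.
Proof.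
move=> ji; apply: le_trans (maxge (fun i => \big[Num.max/0]_(j < n | j != i) F i j) i).
exact: (le_bigmax_cond 0 (F i) ji).
Qed.

Lemma dA1 m nz : 
  \sum_i m i ^+ 2 * nz i ^+ 2 <= (\big[Num.max/0]_(i < n) m i ^+ 2) * \sum_(i < n) nz i ^+ 2.
Proof.
rewrite mulr_sumr; apply: ler_sum => i _; apply: ler_wpM2r; first exact: sqr_ge0.
exact: (maxge (fun i => m i ^+ 2)).
Qed.

Lemma dA3 m nz :
  \sum_i m i ^+ 2 * nz i ^+ 2 <= (\sum_(i < n) m i ^+ 2) * \big[Num.max/0]_(i < n) nz i ^+ 2.
Proof.
rewrite mulr_suml; apply: ler_sum => i _; apply: ler_wpM2l; first exact: sqr_ge0.
exact: (maxge (fun i => nz i ^+ 2)).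
Qed.

Lemma sq_powR (x r : R) : 0 <= x -> powR x (2 * r) = powR (x ^+ 2) r.
Proof. by move=> x0; rewrite powRrM (powR_mulrn 2 x0). Qed.

Lemma dA2 m nz alpha beta : (forall i, 0 <= m i) -> (forall i, 0 <= nz i) ->
  1 < alpha -> alpha^-1 + beta^-1 = 1 ->
  \sum_i m i ^+ 2 * nz i ^+ 2 <=
  powR (\sum_(i < n) powR (m i) (2 * alpha)) alpha^-1 *
  powR (\sum_(i < n) powR (nz i) (2 * beta)) beta^-1.
Proof.
move=> m0 nz0 a1 ab.
have a0 : 0 < alpha by apply: lt_trans a1.
have b0 : 0 < beta.
  rewrite -invr_gt0.
  have : alpha^-1 < 1 by rewrite invf_lt1.
  move: ab; move: (alpha^-1) (beta^-1) => x y; lra.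
have e1 : \sum_(i < n) powR (m i) (2 * alpha) = \sum_(i < n) powR (m i ^+ 2) alpha.
  by apply: eq_bigr => i _; rewrite (sq_powR _ (m0 i)).
have e2 : \sum_(i < n) powR (nz i) (2 * beta) = \sum_(i < n) powR (nz i ^+ 2) beta.
  by apply: eq_bigr => i _; rewrite (sq_powR _ (nz0 i)).
rewrite e1 e2.
exact: (holder_fin xpredT (fun i => sqr_ge0 (m i)) (fun i => sqr_ge0 (nz i)) a0 b0 ab).
Qed.
End Abs.
Section AbsB.
Variables (R : realType) (n : nat).
Implicit Types (m nz : 'I_n -> R) (c : 'I_n -> 'I_n -> R).

Lemma oB1 m c : (forall i j, 0 <= c i j) ->
  \sum_i \sum_(j | j != i) m i ^+ 2 * c i j <=
  (\big[Num.max/0]_(i < n) m i ^+ 2) * \sum_(i < n) \sum_(j < n | j != i) c i j.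
Proof.
move=> c0; rewrite mulr_sumr; apply: ler_sum => i _.
rewrite mulr_sumr; apply: ler_sum => j _.
apply: ler_wpM2r; first exact: c0.
exact: (maxge (fun i => m i ^+ 2)).
Qed.

Lemma oB3 m c : 
  \sum_i \sum_(j | j != i) m i ^+ 2 * c i j <=
  (n.-1)%:R * (\sum_(i < n) m i ^+ 2) *
  \big[Num.max/0]_(i < n) \big[Num.max/0]_(j < n | j != i) c i j.
Proof.
rewrite mulrAC mulr_sumr; apply: ler_sum => i _.
apply: (@le_trans _ _ (\sum_(j < n | j != i) m i ^+ 2 *
    \big[Num.max/0]_(i < n) \big[Num.max/0]_(j < n | j != i) c i j)).
  apply: ler_sum => j ji; apply: ler_wpM2l; first exact: sqr_ge0.
  exact: maxge2.
rewrite cnt le_eqVlt; apply/orP; left; apply/eqP; ring.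
Qed.

Lemma oB2 m c gamma delta : (forall i, 0 <= m i) -> (forall i j, 0 <= c i j) ->
  1 < gamma -> gamma^-1 + delta^-1 = 1 ->
  \sum_i \sum_(j | j != i) m i ^+ 2 * c i j <=
  powR (n.-1)%:R gamma^-1 *
  powR (\sum_(i < n) powR (m i) (2 * gamma)) gamma^-1 *
  powR (\sum_(i < n) \sum_(j < n | j != i) powR (c i j) delta) delta^-1.
Proof.
move=> m0 c0 a1 ab.
have a0 : 0 < gamma by apply: lt_trans a1.
have b0 : 0 < delta.
  rewrite -invr_gt0.
  have : gamma^-1 < 1 by rewrite invf_lt1.
  move: ab; move: (gamma^-1) (delta^-1) => x y; lra.
have e1 : \sum_(i < n) \sum_(j < n | j != i) powR (m i ^+ 2) gamma =
          (n.-1)%:R * \sum_(i < n) powR (m i) (2 * gamma).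
  rewrite mulr_sumr; apply: eq_bigr => i _.
  by rewrite cnt (sq_powR _ (m0 i)).
have s0 : 0 <= \sum_(i < n) powR (m i) (2 * gamma).
  by apply: sumr_ge0 => i _; exact: powR_ge0.
rewrite -(powRM _ (ler0n _ _) s0) -e1.
rewrite !(pair_big_dep xpredT (fun i j => j != i)) /=.
exact: (holder_fin _ (fun p => sqr_ge0 (m p.1)) (fun p => c0 p.1 p.2) a0 b0 ab).
Qed.
End AbsB.
Section Gen.
Variables (R : realType) (K : numFieldType) (absK : K -> R) (cj : K -> K).
Hypothesis absK_ge0 : forall x, 0 <= absK x.
Hypothesis absKM : forall x y, absK (x * y) = absK x * absK y.
Hypothesis absKD : forall x y, absK (x + y) <= absK x + absK y.
Hypothesis absK0 : absK 0 = 0.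
Hypothesis absKJ : forall x, absK (cj x) = absK x.

Lemma absK_sum (I : finType) (F : I -> K) :
  absK (\sum_i F i) <= \sum_i absK (F i).
Proof.
apply: (big_ind2 (fun a b => absK a <= b)); first by rewrite absK0.
  by move=> a1 a2 b1 b2 h1 h2; apply: le_trans (absKD _ _) (lerD h1 h2).
by [].
Qed.

Lemma ip_suml (X : lmodType K) (ip : X -> X -> X -> K) :
  is_2ip cj ip -> forall n (mu : 'I_n -> K) (zs : 'I_n -> X) w z,
  absK (ip (\sum_i mu i *: zs i) w z) <= \sum_i absK (mu i) * absK (ip (zs i) w z).
Proof.
move=> [_ Hx] n mu zs w z.
have ipD : {morph (fun x => ip x w z) : x y / x + y >-> x + y}.
  by move=> x y /=; have [_ [_ [_ [_ [_ ->]]]]] := Hx x y w z 0.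
have ip0 : ip 0 w z = 0.
  by have [_ [_ [_ [_ [h _]]]]] := Hx 0 0 w z 0; rewrite scale0r in h; rewrite h mul0r.
rewrite (big_morph (fun x => ip x w z) ipD ip0).
apply: le_trans (absK_sum _) _; apply: ler_sum => i _.
by have [_ [_ [_ [_ [-> _]]]]] := Hx (zs i) 0 w z (mu i); rewrite absKM.
Qed.

Lemma main_est (X : lmodType K) (ip : X -> X -> X -> K) :
  is_2ip cj ip -> forall n (mu : 'I_n -> K) (zs : 'I_n -> X) z,
  absK (ip (\sum_i mu i *: zs i) (\sum_i mu i *: zs i) z) <=
  \sum_i \sum_j absK (mu i) * absK (mu j) * absK (ip (zs i) (zs j) z).
Proof.
move=> H n mu zs z; have [_ Hx] := H.
have sym : forall x y, absK (ip y x z) = absK (ip x y z).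
  by move=> x y; have [_ [_ [_ [-> _]]]] := Hx x x y z 0; rewrite absKJ.
apply: le_trans (ip_suml H _ _ _ _) _; apply: ler_sum => i _.
rewrite sym.
apply: le_trans (ler_wpM2l (absK_ge0 _) (ip_suml H _ _ _ _)) _.
rewrite mulr_sumr; apply: ler_sum => j _.
by rewrite sym mulrA.
Qed.
End Gen.
Section Gen2.
Variables (R : realType) (K : numFieldType) (absK : K -> R) (cj : K -> K).
Hypothesis absK_ge0 : forall x, 0 <= absK x.
Hypothesis absKM : forall x y, absK (x * y) = absK x * absK y.
Hypothesis absKD : forall x y, absK (x + y) <= absK x + absK y.
Hypothesis absK0 : absK 0 = 0.
Hypothesis absKJ : forall x, absK (cj x) = absK x.

Lemma key_split (X : lmodType K) (ip : X -> X -> X -> K) :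
  is_2ip cj ip -> forall n (mu : 'I_n -> K) (zs : 'I_n -> X) z,
  tnorm absK ip (\sum_i mu i *: zs i) z ^+ 2 <=
  \sum_i absK (mu i) ^+ 2 * tnorm absK ip (zs i) z ^+ 2 +
  \sum_i \sum_(j | j != i) absK (mu i) ^+ 2 * absK (ip (zs i) (zs j) z).
Proof.
move=> H n mu zs z; have [_ Hx] := H.
have sym : forall i j, absK (ip (zs i) (zs j) z) = absK (ip (zs j) (zs i) z).
  by move=> i j; have [_ [_ [_ [-> _]]]] := Hx (zs j) (zs j) (zs i) z 0; rewrite absKJ.
rewrite /tnorm sqr_sqrtr; last exact: absK_ge0.
apply: le_trans (main_est absK_ge0 absKM absKD absK0 absKJ H mu zs z) _.
have E : \sum_i \sum_j absK (mu i) * absK (mu j) * absK (ip (zs i) (zs j) z) =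
   \sum_i absK (mu i) ^+ 2 * Num.sqrt (absK (ip (zs i) (zs i) z)) ^+ 2 +
   \sum_i \sum_(j | j != i) absK (mu i) * absK (mu j) * absK (ip (zs i) (zs j) z).
  rewrite -big_split; apply: eq_bigr => i _.
  rewrite (bigD1 i) //= sqr_sqrtr; last exact: absK_ge0.
  by rewrite expr2.
rewrite E lerD2l.
exact: (off_le (fun i => absK_ge0 (mu i)) (fun i j => absK_ge0 _) sym).
Qed.

Lemma claim_gen : cor24_claim absK cj.
Proof.
move=> X ip H n n0 zs z mu nz A1 A2 A3 B1 B2 B3 alpha beta gamma delta a1 ab g1 gd A B hA hB.
apply: le_trans (key_split H mu zs z) _.
have m0 : forall i, 0 <= absK (mu i) by move=> i; exact: absK_ge0.
have nz0 : forall i, 0 <= nz i by move=> i; exact: sqrtr_ge0.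
have c0 : forall i j, 0 <= absK (ip (zs i) (zs j) z) by move=> i j; exact: absK_ge0.
apply: lerD.
  case: hA => [->|[->|->]].
  - exact: (dA1 (fun i => absK (mu i)) nz).
  - exact: (dA2 m0 nz0 a1 ab).
  - exact: (dA3 (fun i => absK (mu i)) nz).
case: hB => [->|[->|->]].
- exact: (oB1 (fun i => absK (mu i)) c0).
- exact: (oB2 m0 c0 g1 gd).
- exact: (oB3 (fun i => absK (mu i)) (fun i j => absK (ip (zs i) (zs j) z))).
Qed.
End Gen2.
Local Open Scope complex_scope.
Section Cx.
Variable R : realType.
Lemma cRe_ge0 (x : R[i]) : (0 <= complex.Re `|x|)%R.
Proof. have := normr_ge0 x; rewrite lecE => /andP[_ h]. exact: h. Qed.
Lemma cReM (x y : R[i]) : complex.Re `|x * y| = (complex.Re `|x| * complex.Re `|y|)%R.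
Proof. by rewrite normrM !normc_def /= !mulr0 subr0. Qed.
Lemma cReD (x y : R[i]) : (complex.Re `|x + y| <= complex.Re `|x| + complex.Re `|y|)%R.
Proof. by have := ler_normD x y; rewrite lecE => /andP[_]. Qed.
Lemma cRe0 : complex.Re `|0 : R[i]| = 0%R.
Proof. by rewrite normr0. Qed.
Lemma cReJ (x : R[i]) : complex.Re `|x^*| = complex.Re `|x|.
Proof. by rewrite !normc_def; case: x => a b /=; rewrite sqrrN. Qed.
End Cx.
Local Close Scope complex_scope.

Theorem corollary2p4 (R : realType) :
  cor24_claim (fun x : R => `|x|) (fun x : R => x) /\
  cor24_claim (fun x : R[i] => complex.Re `|x|) (fun x : R[i] => x^*%C).
Proof.
split.
  apply: claim_gen => //.
  - exact: normrM.
  - exact: ler_normD.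
  - exact: normr0.
apply: claim_gen.
- exact: cRe_ge0.
- exact: cReM.
- exact: cReD.
- exact: cRe0.
- exact: cReJ.
Qed.
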